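(* Let $\mathcal{H}=(Q_0,Q_1,\beta)$ be a directed tensor-labeled hypergraph over $\mathbb{R}$ and $k\ge0$. The operator $L_{\le k}:=(\pi_{\le k}\partial_\beta)^*(\pi_{\le k}\partial_\beta)$ on $\mathbb{R}^{Q_1}$ satisfies: (1) $L_{\le k}$ is symmetric positive semi-definite; (2) $\mathrm{Ker}(L_{\le k})=\mathcal{Z}_{\le k}(\mathcal{H})$; (3) $\mathrm{rank}(L_{\le k})=|V_{\mathrm{macro}}|-c_{\mathrm{macro}}-\delta_{\le k}(\mathcal{H})$; (4) if $k\le\ell$ then $L_{\le k}\preceq L_{\le\ell}$ in the Loewner order, and writing the eigenvalues of $L_{\le k}$ in ascending order $0\le\lambda_1^{(k)}\le\cdots\le\lambda_{|Q_1|}^{(k)}$, one has $\lambda_i^{(k)}\le\lambda_i^{(\ell)}$ for all $i$.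
   Context: $T(\mathbb{R}^{Q_0})=\bigoplus_{k\ge0}T^k$, $T^k=(\mathbb{R}^{Q_0})^{\otimes k}$, with the inner product making the standard tensor basis orthonormal (distinct degrees orthogonal); $\pi_{\le k}$ is the orthogonal projection onto $\bigoplus_{j\le k}T^j$. $\mathbb{R}^{Q_1}$ has the standard inner product. A directed tensor-labeled hypergraph is $\mathcal{H}=(Q_0,Q_1,\beta)$ ($Q_0,Q_1$ finite) with $\beta:\mathbb{R}^{Q_1}\to T\times T$ linear, $\beta(\mathbf{1}_e)=(A_e,B_e)$; $\partial_\beta:\mathbf{1}_e\mapsto B_e-A_e$; $^*$ denotes adjoint. $\mathcal{Z}_{\le k}(\mathcal{H})=\mathrm{Ker}(\pi_{\le k}\circ\partial_\beta)$. $V_{\mathrm{macro}}=\{A_e\}\cup\{B_e\}$; macrograph on $V_{\mathrm{macro}}$ with edges $Q_1$, $e:A_e\to B_e$, $c_{\mathrm{macro}}$ its number of weakly connected components; $B_{\mathrm{macro}}:\mathbf{1}_e\mapsto\mathbf{1}_{B_e}-\mathbf{1}_{A_e}$; $\hat\phi:\mathbb{R}^{V_{\mathrm{macro}}}\to T(\mathbb{R}^{Q_0})$, $\mathbf{1}_w\mapsto w$; $\delta_{\le k}(\mathcal{H})=\dim(\mathrm{Im}B_{\mathrm{macro}}\cap\mathrm{Ker}(\pi_{\le k}\circ\hat\phi))$. *)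

(* Defs.v *)
From mathcomp Require Import all_boot all_order all_algebra.
From mathcomp Require Export reals.
Set Implicit Arguments. Unset Strict Implicit. Unset Printing Implicit Defensive.
Import Order.TTheory GRing.Theory Num.Theory.
Local Open Scope ring_scope.

(* Q_0 = 'I_q.  Words over Q_0 of length <= D: a word of length d is a
   d.-tuple of vertices.  These index the standard (orthonormal) tensor basis
   of  \bigoplus_{j <= D} T^j  inside  T(R^{Q_0}). *)
Notation word q D := {d : 'I_D.+1 & (val d).-tuple 'I_q}.
Definition tdim (q D : nat) : nat := #|{: word q D}|.

Definition wdeg (q D : nat) (j : 'I_(tdim q D)) : nat :=
  val (tag (@enum_val (word q D) predT j)).

Section Defs.
Variables (R : realType) (q D m : nat).
(* Q_1 = 'I_m ; beta(1_e) = (A_e, B_e) with A_e = col e A, B_e = col e B. *)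
Variables (A B : 'M[R]_(tdim q D, m)).

Definition proj (k : nat) : 'M[R]_(tdim q D) :=
  diag_mx (\row_j ((wdeg j <= k)%N)%:R).

(* matrix of  pi_{<=k} o partial_beta  (partial_beta 1_e = B_e - A_e) *)
Definition pbnd (k : nat) : 'M[R]_(tdim q D, m) := proj k *m (B - A).

(* L_{<=k} = (pi_{<=k} partial)^* (pi_{<=k} partial); adjoint = transpose
   for the standard inner products. *)
Definition Lap (k : nat) : 'M[R]_m := (pbnd k)^T *m pbnd k.

Definition Vmac : seq 'cV[R]_(tdim q D) :=
  undup ([seq col e A | e <- enum 'I_m] ++ [seq col e B | e <- enum 'I_m]).

Definition macro_adj : rel 'I_(size Vmac) := fun i j =>
  [exists e : 'I_m,
     ((index (col e A) Vmac == i) && (index (col e B) Vmac == j))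
  || ((index (col e A) Vmac == j) && (index (col e B) Vmac == i))].

Definition c_macro : nat := n_comp macro_adj predT.

Definition Bmac : 'M[R]_(size Vmac, m) :=
  \matrix_(i, e) (((i : nat) == index (col e B) Vmac)%:R
                  - ((i : nat) == index (col e A) Vmac)%:R).

Definition Phimac : 'M[R]_(tdim q D, size Vmac) :=
  \matrix_(j, i) (nth 0 Vmac i) j 0.

(* delta_{<=k} = dim (Im B_macro  cap  Ker (pi_{<=k} o phi_hat)),
   subspaces of R^{V_macro} written as row spaces *)
Definition delta (k : nat) : nat :=
  \rank ((Bmac)^T :&: kermx ((proj k *m Phimac)^T))%MS.
End Defs.

Section Spec.
Variables (R : realType) (m : nat).
Definition sym_mx (M : 'M[R]_m) : Prop := M^T = M.
Definition psd (M : 'M[R]_m) : Prop :=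
  forall x : 'cV[R]_m, 0 <= (x^T *m M *m x) 0 0.
Definition loewner_le (M1 M2 : 'M[R]_m) : Prop := psd (M2 - M1).
Definition eig_asc (M : 'M[R]_m) (s : seq R) : Prop :=
  [/\ size s = m, sorted <=%R s & char_poly M = \prod_(x <- s) ('X - x%:P)].
End Spec.

(* Main.v *)
Require Import Defs.
From mathcomp Require Import all_boot all_order all_algebra.
From mathcomp Require Import reals.
From mathcomp Require Import complex zify.
Import Order.TTheory GRing.Theory Num.Theory.
Local Open Scope ring_scope.
Local Open Scope sesquilinear_scope.
Set Implicit Arguments. Unset Strict Implicit. Unset Printing Implicit Defensive.

Lemma gram_quad (R : realType) n p (X : 'M[R]_(p, n)) (x : 'cV[R]_n) :
  (x^T *m (X^T *m X) *m x) 0 0 = \sum_i ((X *m x) i 0) ^+ 2.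
Proof.
rewrite mulmxA -trmx_mul -mulmxA mxE; apply: eq_bigr => i _.
by rewrite mxE expr2.
Qed.

Lemma psd_gram (R : realType) n p (X : 'M[R]_(p, n)) : psd (X^T *m X).
Proof.
move=> x; rewrite gram_quad; apply: sumr_ge0 => i _; exact: sqr_ge0.
Qed.

Lemma gram_ker (R : realType) n p (X : 'M[R]_(p, n)) (x : 'cV[R]_n) :
  X^T *m X *m x = 0 <-> X *m x = 0.
Proof.
split; last by move=> h; rewrite -mulmxA h mulmx0.
move=> h; have : (x^T *m (X^T *m X) *m x) 0 0 = 0.
  by rewrite -mulmxA h mulmx0 mxE.
rewrite gram_quad => /psumr_eq0P H.
apply/matrixP => i j; rewrite ord1 [RHS]mxE.
have /eqP := H (fun i _ => sqr_ge0 _) i isT. rewrite sqrf_eq0 => /eqP ->. by [].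
Qed.

Lemma gram_kerm (R : realType) n p r (X : 'M[R]_(p, n)) (Y : 'M[R]_(r, n)) :
  Y *m (X^T *m X) = 0 <-> Y *m X^T = 0.
Proof.
split; last by move=> h; rewrite mulmxA h mul0mx.
move=> h; apply/row_matrixP => i; rewrite row_mul row0.
apply: trmx_inj; rewrite trmx_mul trmxK trmx0.
apply/gram_ker.
have -> : X^T *m X *m (row i Y)^T = (row i Y *m (X^T *m X))^T.
  by rewrite trmx_mul trmx_mul trmxK.
by rewrite -row_mul h row0 trmx0.
Qed.

Lemma rank_gram (R : realType) n p (X : 'M[R]_(p, n)) :
  \rank (X^T *m X) = \rank X.
Proof.
have e : (kermx (X^T *m X) :=: kermx X^T)%MS.
  apply/eqmxP/andP; split; rewrite sub_kermx; apply/eqP.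
    by apply/gram_kerm; exact: mulmx_ker.
  by apply/gram_kerm; exact: mulmx_ker.
have := mxrank_ker (X^T *m X); rewrite e mxrank_ker mxrank_tr => h.
have h1 := rank_leq_row X^T; rewrite mxrank_tr in h1.
have h2 := rank_leq_row (X^T *m X).
by rewrite -(subKn h2) -h subKn.
Qed.

Lemma proj_tr (R : realType) q D k : (proj R q D k)^T = proj R q D k.
Proof. exact: tr_diag_mx. Qed.

Lemma projM (R : realType) q D k l :
  proj R q D k *m proj R q D l = proj R q D (minn k l).
Proof.
apply/matrixP => i j; rewrite mul_diag_mx !mxE.
by case: (i =P j) => [->|_]; rewrite ?mulr0 // !mulr1n -natrM leq_min mulnb.
Qed.

Lemma Lap_alt (R : realType) q D m (A B : 'M[R]_(tdim q D, m)) k :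
  Lap A B k = (B - A)^T *m proj R q D k *m (B - A).
Proof.
rewrite /Lap /pbnd trmx_mul proj_tr -!mulmxA; congr (_ *m _).
by rewrite !mulmxA projM minnn.
Qed.

Lemma Lap_loewner (R : realType) q D m (A B : 'M[R]_(tdim q D, m)) k l :
  (k <= l)%N -> loewner_le (Lap A B k) (Lap A B l).
Proof.
move=> kl; rewrite /loewner_le; set G := (proj R q D l - proj R q D k) *m (B - A).
have -> : Lap A B l - Lap A B k = G^T *m G.
  have E : (proj R q D l - proj R q D k)^T *m (proj R q D l - proj R q D k)
           = proj R q D l - proj R q D k.
    rewrite (raddfB (@trmx _ _ _)) /= /proj !tr_diag_mx -/(proj R q D l) -/(proj R q D k) mulmxBl !mulmxBr !projM minnn.
    rewrite (minn_idPl kl) (minn_idPr kl) minnn.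
    by rewrite subrr subr0.
  have E2 : G^T *m G = (B - A)^T *m (proj R q D l - proj R q D k) *m (B - A).
    by rewrite /G trmx_mul -[in RHS]E !mulmxA.
  by rewrite E2 !Lap_alt -mulmxBl -mulmxBr.
exact: psd_gram.
Qed.


Lemma sum_delta (R : pzRingType) n (F : 'I_n -> R) a :
  \sum_i F i * (i == a)%:R = F a.
Proof.
rewrite (bigD1 a) //= eqxx mulr1 big1 ?addr0 // => i /negPf ->.
by rewrite mulr0.
Qed.

Lemma memVA (R : realType) q D m (A B : 'M[R]_(tdim q D, m)) e :
  col e A \in Vmac A B.
Proof. by rewrite mem_undup mem_cat; apply/orP; left; apply/mapP; exists e; rewrite ?mem_enum. Qed.

Lemma memVB (R : realType) q D m (A B : 'M[R]_(tdim q D, m)) e :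
  col e B \in Vmac A B.
Proof. by rewrite mem_undup mem_cat; apply/orP; right; apply/mapP; exists e; rewrite ?mem_enum. Qed.

Definition oA (R : realType) q D m (A B : 'M[R]_(tdim q D, m)) e
  : 'I_(size (Vmac A B)) := Ordinal (etrans (index_mem _ _) (memVA A B e)).
Definition oB (R : realType) q D m (A B : 'M[R]_(tdim q D, m)) e
  : 'I_(size (Vmac A B)) := Ordinal (etrans (index_mem _ _) (memVB A B e)).

Lemma BmacE (R : realType) q D m (A B : 'M[R]_(tdim q D, m)) i e :
  Bmac A B i e = (i == oB A B e)%:R - (i == oA A B e)%:R.
Proof. by rewrite mxE. Qed.

Lemma BA_fact (R : realType) q D m (A B : 'M[R]_(tdim q D, m)) :
  B - A = Phimac A B *m Bmac A B.
Proof.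
apply/matrixP => j e; rewrite !mxE.
under eq_bigr => i _ do rewrite BmacE mulrBr.
rewrite sumrB.
under eq_bigr => i _ do rewrite mxE.
rewrite sum_delta.
under eq_bigr => i _ do rewrite mxE.
rewrite sum_delta /= !nth_index ?memVA ?memVB // !mxE.
by [].
Qed.

Lemma madj_sym (R : realType) q D m (A B : 'M[R]_(tdim q D, m)) :
  symmetric (@macro_adj R q D m A B).
Proof.
move=> i j; rewrite /macro_adj; apply: eq_existsb => e; exact: orbC.
Qed.

Lemma madjE (R : realType) q D m (A B : 'M[R]_(tdim q D, m)) i j :
  @macro_adj R q D m A B i j ->
  exists e, (oA A B e = i /\ oB A B e = j) \/ (oA A B e = j /\ oB A B e = i).
Proof.
move=> /existsP [e /orP [/andP [h1 h2]|/andP [h1 h2]]]; exists e.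
  by left; split; apply/val_inj; apply/eqP.
by right; split; apply/val_inj; apply/eqP.
Qed.

Lemma madj_e (R : realType) q D m (A B : 'M[R]_(tdim q D, m)) e :
  @macro_adj R q D m A B (oA A B e) (oB A B e).
Proof. by apply/existsP; exists e; rewrite !eqxx. Qed.

Lemma ker_Bmac (R : realType) q D m (A B : 'M[R]_(tdim q D, m))
   (y : 'rV[R]_(size (Vmac A B))) :
  y *m Bmac A B = 0 -> forall e, y 0 (oA A B e) = y 0 (oB A B e).
Proof.
move=> /matrixP h e; have := h 0 e; rewrite !mxE.
under eq_bigr => i _ do rewrite BmacE mulrBr.
rewrite sumrB !sum_delta => /eqP; rewrite subr_eq0 => /eqP ->; by [].
Qed.

Lemma const_connect (R : realType) q D m (A B : 'M[R]_(tdim q D, m))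
   (y : 'rV[R]_(size (Vmac A B))) :
  (forall e, y 0 (oA A B e) = y 0 (oB A B e)) ->
  forall i j, connect (@macro_adj R q D m A B) i j -> y 0 i = y 0 j.
Proof.
move=> hy i j /connectP [p hp ->] {j}.
elim: p i hp => [|a p IH] i //= /andP [hia hp].
rewrite -(IH a hp); have [e [[<- <-]|[<- <-]]] := madjE hia; by rewrite hy.
Qed.

Definition Kmx (R : realType) q D m (A B : 'M[R]_(tdim q D, m)) :
  'M[R]_(#|fingraph.roots (@macro_adj R q D m A B)|, size (Vmac A B)) :=
  \matrix_(r, j) (fingraph.root (@macro_adj R q D m A B) j == enum_val r)%:R.

Lemma rank_Kmx (R : realType) q D m (A B : 'M[R]_(tdim q D, m)) :
  \rank (Kmx A B) = #|fingraph.roots (@macro_adj R q D m A B)|.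
Proof.
set e := @macro_adj R q D m A B.
pose S : 'M[R]_(size (Vmac A B), #|fingraph.roots e|) :=
  \matrix_(j, r) (j == enum_val r)%:R.
have KS : Kmx A B *m S = 1%:M.
  apply/matrixP => r r'; rewrite !mxE.
  under eq_bigr => j _ do rewrite !mxE.
  rewrite sum_delta.
  have /eqP -> : fingraph.root e (enum_val r') == enum_val r' := enum_valP r'.
  by rewrite (inj_eq enum_val_inj) eq_sym.
apply/eqP; rewrite eqn_leq rank_leq_row /=.
by rewrite -{1}(mxrank1 R #|fingraph.roots e|) -KS mxrankM_maxl.
Qed.

Lemma ker_Kmx (R : realType) q D m (A B : 'M[R]_(tdim q D, m)) :
  (kermx (Bmac A B) :=: Kmx A B)%MS.
Proof.
set e := @macro_adj R q D m A B.
have symE : connect_sym e by apply: sym_connect_sym; exact: madj_sym.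
apply/eqmxP/andP; split.
  apply/row_subP => i; set y := row i _.
  have hy : y *m Bmac A B = 0 by rewrite /y -row_mul mulmx_ker row0.
  have hc := const_connect (ker_Bmac hy); clearbody y.
  have -> : y = (\row_r y 0 (enum_val r)) *m Kmx A B.
    apply/rowP => j; rewrite !mxE.
    under eq_bigr => r _ do rewrite !mxE.
    rewrite -(big_enum_val (A := fingraph.roots e) (fun x => y 0 x * (fingraph.root e j == x)%:R)) /=.
    rewrite (bigD1 (fingraph.root e j)) ?inE ?roots_root //= eqxx mulr1.
    rewrite big1 ?addr0; first exact: hc (connect_root e j).
    by move=> x /andP [_ /negPf]; rewrite eq_sym => ->; rewrite mulr0.
  exact: submxMl.
rewrite sub_kermx; apply/eqP/matrixP => r f; rewrite !mxE.
under eq_bigr => j _ do rewrite BmacE mulrBr.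
rewrite sumrB !sum_delta !mxE.
have /(fingraph.rootP symE) -> : connect e (oA A B f) (oB A B f).
  exact/connect1/madj_e.
by rewrite subrr.
Qed.

Lemma rank_Bmac (R : realType) q D m (A B : 'M[R]_(tdim q D, m)) :
  \rank (Bmac A B) = (size (Vmac A B) - c_macro A B)%N.
Proof.
have h := mxrank_ker (Bmac A B); rewrite ker_Kmx rank_Kmx in h.
have -> : c_macro A B = #|fingraph.roots (@macro_adj R q D m A B)|.
  by apply: eq_card => x; rewrite !inE andbT.
by rewrite h subKn ?rank_leq_row.
Qed.


Lemma rank_formula (R : realType) q D m (A B : 'M[R]_(tdim q D, m)) k :
  (\rank (Lap A B k))%:Z
        = (size (Vmac A B))%:Z - (c_macro A B)%:Z - (delta A B k)%:Z.
Proof.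
rewrite /Lap rank_gram -mxrank_tr /pbnd BA_fact mulmxA trmx_mul.
have h := mxrank_mul_ker (Bmac A B)^T ((proj R q D k *m Phimac A B)^T).
rewrite -/(delta A B k) mxrank_tr rank_Bmac in h.
have hc : (c_macro A B <= size (Vmac A B))%N.
  by rewrite /c_macro; apply: leq_trans (max_card _) _; rewrite card_ord.
by rewrite (subzn hc) -h PoszD addrK.
Qed.


Lemma char_poly_conj (F : fieldType) n (P M : 'M[F]_n) :
  P \in unitmx -> char_poly (invmx P *m M *m P) = char_poly M.
Proof.
move=> Pu; rewrite /char_poly /char_poly_mx.
set iP := map_mx polyC (invmx P); set P' := map_mx polyC P.
have E : 'X%:M - map_mx polyC (invmx P *m M *m P)
       = iP *m ('X%:M - map_mx polyC M) *m P'.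
  rewrite mulmxBr mulmxBl !map_mxM; congr (_ - _).
  rewrite scalar_mxC -mulmxA -map_mxM mulVmx //.
  by rewrite map_mx1 mulmx1.
rewrite E !det_mulmx mulrC mulrA -det_mulmx -map_mxM mulmxV //.
by rewrite map_mx1 det1 mul1r.
Qed.


Lemma creal_real (R : rcfType) (x : R) : (real_complex R x : R[i]) \is Num.real.
Proof.
rewrite realE; have [h|h] := lerP 0 x.
  by rewrite -[0 : R[i]]/(real_complex R 0) lecR h.
by apply/orP; right; rewrite -[0 : R[i]]/(real_complex R 0) lecR (ltW h).
Qed.

Lemma real_C (R : rcfType) (z : R[i]) : z \is Num.real -> z = real_complex R (complex.Re z).
Proof.
case: z => a b; rewrite realE !lecE /= => /orP [] /andP [/eqP h _]; [by rewrite h | by rewrite -h].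
Qed.

Lemma spec_real (R : rcfType) n (A : 'M[R]_n) : A^T = A ->
  exists2 P : 'M[R[i]]_n, P \is unitarymx &
   exists d : 'rV[R]_n, map_mx (real_complex R) A =
     invmx P *m diag_mx (map_mx (real_complex R) d) *m P.
Proof.
move=> hA; set Ac := map_mx (real_complex R) A.
have sym : Ac \is symmetricmx.
  apply/is_hermitianmxP; rewrite expr0 scale1r map_mx_id //.
  by rewrite /Ac map_trmx hA.
have realA : Ac \is a realmx by apply/mxOverP => i j; rewrite mxE creal_real.
have herm := realsym_hermsym sym realA.
have /orthomx_spectralP E := hermitian_normalmx herm.
exists (spectralmx Ac); first exact: spectral_unitarymx.
exists (map_mx (@complex.Re R) (spectral_diag Ac)).
have dreal := hermitian_spectral_diag_real herm.
rewrite {1}E; congr (_ *m diag_mx _ *m _); apply/matrixP => i j.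
by rewrite !mxE -real_C //; exact: (mxOverP dreal).
Qed.

Definition dseq (R : rcfType) n (d : 'rV[R]_n) : seq R := [seq d 0 i | i <- enum 'I_n].

Lemma char_spec (R : rcfType) n (A : 'M[R]_n) (P : 'M[R[i]]_n) (d : 'rV[R]_n) :
  P \is unitarymx ->
  map_mx (real_complex R) A = invmx P *m diag_mx (map_mx (real_complex R) d) *m P ->
  char_poly A = \prod_(x <- dseq d) ('X - x%:P).
Proof.
move=> Pu E; apply: (@map_poly_inj _ _ (real_complex R)).
rewrite map_char_poly E char_poly_conj ?unitarymx_unit // char_poly_trig //.
rewrite rmorph_prod /dseq big_map big_enum /=; apply: eq_bigr => i _.
rewrite !mxE eqxx mulr1n. rewrite rmorphB /= map_polyX map_polyC. by [].
Qed.


Lemma conj_rc (R : rcfType) (r : R) : (real_complex R r)^* = real_complex R r.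
Proof. by apply/eqP; rewrite eq_complex /= oppr0 !eqxx. Qed.

Lemma psd_complex (R : rcfType) n (N : 'M[R]_n) : N^T = N ->
  (forall x : 'cV[R]_n, 0 <= (x^T *m N *m x) 0 0) ->
  forall x : 'rV[R[i]]_n,
    0 <= (x *m map_mx (real_complex R) N *m x^t*) 0 0.
Proof.
move=> sN pN x.
set a := map_mx (@complex.Re R) x; set b := map_mx (@complex.Im R) x.
set rc := real_complex R.
set I : R[i] := 'i%C.
have ex : x = map_mx rc a + I *: map_mx rc b.
  by apply/matrixP => i j; rewrite !mxE [LHS]complexE.
have ext : x^t* = (map_mx rc a)^T + (- I) *: (map_mx rc b)^T.
  rewrite ex; apply/matrixP => i j; rewrite !mxE rmorphD rmorphM /= !conj_rc.
  by congr (_ + _ * _); apply/eqP; rewrite eq_complex /= oppr0 !eqxx.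
have q u w : map_mx rc u *m map_mx rc N *m (map_mx rc w)^T
              = map_mx rc (u *m N *m w^T).
  by rewrite map_trmx -!map_mxM.
have swap : b *m N *m a^T = a *m N *m b^T.
  apply/matrixP => i j; rewrite !ord1.
  transitivity ((b *m N *m a^T)^T 0 0); first by rewrite [RHS]mxE.
  by rewrite !trmx_mul trmxK sN mulmxA.
rewrite ext {1}ex !mulmxDl !mulmxDr -!scalemxAr -!scalemxAl !q swap.
have h1 := pN a^T; have h2 := pN b^T; rewrite trmxK in h1; rewrite trmxK in h2.
rewrite !mxE; rewrite !mxE in h1 h2.
rewrite mulrA.
have -> : - I * I = 1 by rewrite mulNr -expr2 sqr_i opprK.
rewrite mul1r addrA mulNr addrNK /rc -rmorphD /= ler0c.
exact: addr_ge0.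
Qed.

Lemma unit_ortho (C : numClosedFieldType) n (P : 'M[C]_n) :
  P \is unitarymx -> P^t* *m P = 1%:M.
Proof. by move=> Pu; rewrite -invmx_unitary // mulVmx // unitarymx_unit. Qed.

Lemma trC_mul (C : numClosedFieldType) m n p (X : 'M[C]_(m, n)) (Y : 'M[C]_(n, p)) :
  (X *m Y)^t* = Y^t* *m X^t*.
Proof. by rewrite trmx_mul map_mxM. Qed.

Lemma qform_spec (C : numClosedFieldType) n (P : 'M[C]_n) (d : 'rV[C]_n)
   (x : 'rV[C]_n) : P \is unitarymx ->
  (x *m (invmx P *m diag_mx d *m P) *m x^t*) 0 0
   = \sum_j (((x *m P^t*) 0 j) * ((x *m P^t*) 0 j)^*) * d 0 j.
Proof.
move=> Pu; rewrite invmx_unitary //.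
set y := x *m P^t*.
have -> : x *m (P^t* *m diag_mx d *m P) *m x^t* = y *m diag_mx d *m y^t*.
  by rewrite /y trC_mul trmxCK !mulmxA.
rewrite mul_mx_diag mxE; apply: eq_bigr => j _; rewrite !mxE.
by rewrite mulrAC.
Qed.

Lemma norm_spec (C : numClosedFieldType) n (P : 'M[C]_n) (x : 'rV[C]_n) :
  P \is unitarymx ->
  (x *m x^t*) 0 0 = \sum_j (((x *m P^t*) 0 j) * ((x *m P^t*) 0 j)^*).
Proof.
move=> Pu; have -> : x *m x^t* = (x *m P^t*) *m (x *m P^t*)^t*.
  by rewrite trC_mul trmxCK mulmxA -[x *m _ *m P]mulmxA unit_ortho // mulmx1.
by rewrite mxE; apply: eq_bigr => j _; rewrite !mxE.
Qed.

Lemma rowsub_unitary (C : numClosedFieldType) n k (f : 'I_k -> 'I_n)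
   (P : 'M[C]_n) : injective f -> P \is unitarymx -> rowsub f P \is unitarymx.
Proof.
move=> finj /unitarymxP Pu; apply/unitarymxP; apply/matrixP => i j.
have := congr1 (fun M : 'M_n => M (f i) (f j)) Pu; rewrite /= !mxE (inj_eq finj).
by move=> <-; apply: eq_bigr => l _; rewrite !mxE.
Qed.

Lemma rowsub_support (C : numClosedFieldType) n k (f : 'I_k -> 'I_n)
   (P : 'M[C]_n) (v : 'rV[C]_k) j : P \is unitarymx -> (forall i, f i != j) ->
  (v *m rowsub f P *m P^t*) 0 j = 0.
Proof.
move=> /unitarymxP Pu hf; rewrite -mulmxA mxE big1 // => i _.
have -> : (rowsub f P *m P^t*) i j = (P *m P^t*) (f i) j.
  by rewrite !mxE; apply: eq_bigr => l _; rewrite !mxE.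
by rewrite Pu mxE (negPf (hf i)) mulr0.
Qed.

Lemma lt_rc (R : rcfType) (a b : R) :
  (real_complex R a < real_complex R b) = (a < b).
Proof. exact: ltcR. Qed.

Lemma le_rc (R : rcfType) (a b : R) :
  (real_complex R a <= real_complex R b) = (a <= b).
Proof. exact: lecR. Qed.

Lemma count_mono (R : rcfType) n (Lk Ll : 'M[R]_n) :
  (Ll - Lk)^T = Ll - Lk ->
  (forall x : 'cV[R]_n, 0 <= (x^T *m (Ll - Lk) *m x) 0 0) ->
  forall (Pk Pl : 'M[R[i]]_n) (dk dl : 'rV[R]_n),
  Pk \is unitarymx -> Pl \is unitarymx ->
  map_mx (real_complex R) Lk =
    invmx Pk *m diag_mx (map_mx (real_complex R) dk) *m Pk ->
  map_mx (real_complex R) Ll =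
    invmx Pl *m diag_mx (map_mx (real_complex R) dl) *m Pl ->
  forall t : R,
  (#|[pred j : 'I_n | (dl 0 j <= t)%R]| <= #|[pred j : 'I_n | (dk 0 j <= t)%R]|)%N.
Proof.
move=> sN pN Pk Pl dk dl Pku Plu Ek El t.
set rc := real_complex R.
rewrite leqNgt; apply/negP => hlt.
set Sk := [pred j : 'I_n | t < dk 0 j]; set Sl := [pred j : 'I_n | dl 0 j <= t].
have cardk : (#|[pred j : 'I_n | (dk 0 j <= t)%R]| + #|Sk|)%N = n.
  apply: etrans (card_ord n); rewrite -(cardC [pred j : 'I_n | (dk 0 j <= t)%R]); congr (_ + _)%N.
  by apply: eq_card => j; rewrite !inE ltNge.
set W := rowsub (@enum_val _ (mem Sk)) Pk.
set U := rowsub (@enum_val _ (mem Sl)) Pl.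
have rW : \rank W = #|Sk|.
  by apply: mxrank_unitary; apply: rowsub_unitary => //; exact: enum_val_inj.
have rU : \rank U = #|Sl|.
  by apply: mxrank_unitary; apply: rowsub_unitary => //; exact: enum_val_inj.
have hcap := mxrank_sum_cap U W.
have hsum := rank_leq_col (U + W)%MS.
have : (U :&: W)%MS != 0.
  rewrite -mxrank_eq0; apply/eqP => h0.
  rewrite h0 addn0 rU rW in hcap.
  move: hlt; rewrite -/Sl; lia.
move=> /rowV0Pn [x]; rewrite sub_capmx => /andP [xU xW] xn0.
have [vl exl] := submxP xU; have [vk exk] := submxP xW.
set y := x *m Pk^t*; set y' := x *m Pl^t*.
have supk j : ~~ Sk j -> y 0 j = 0.
  move=> nj; rewrite /y exk; apply: rowsub_support => // i.
  by apply: contraNneq nj => <-; have := enum_valP i.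
have supl j : ~~ Sl j -> y' 0 j = 0.
  move=> nj; rewrite /y' exl; apply: rowsub_support => // i.
  by apply: contraNneq nj => <-; have := enum_valP i.
have yn0 : exists j, y 0 j != 0.
  apply/existsP; apply: contraNT xn0; rewrite negb_exists => /forallP h.
  have -> : x = y *m Pk by rewrite /y -mulmxA unit_ortho // mulmx1.
  suff -> : y = 0 by rewrite mul0mx.
  by apply/rowP => j; rewrite [RHS]mxE; have := h j; rewrite negbK => /eqP.
set Qk := (x *m map_mx rc Lk *m x^t*) 0 0.
set Ql := (x *m map_mx rc Ll *m x^t*) 0 0.
set nr := (x *m x^t*) 0 0.
have A1 : 0 < Qk - rc t * nr.
  rewrite /Qk /nr Ek qform_spec // (norm_spec x Pku) -/y mulr_sumr -sumrB.
  have [j0 hj0] := yn0.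
  rewrite (bigD1 j0) //=; apply: ltr_wpDr.
    apply: sumr_ge0 => j _; case: (boolP (Sk j)) => hj.
      by rewrite [rc t * _]mulrC -mulrBr mulr_ge0 ?mul_conjC_ge0 // mxE subr_ge0 le_rc ltW.
    by rewrite supk // !mul0r mulr0 subrr.
  have hk : Sk j0 by apply: contraNT hj0 => /supk ->.
  by rewrite [rc t * _]mulrC -mulrBr mulr_gt0 ?mul_conjC_gt0 // mxE subr_gt0 lt_rc.
have A2 : Ql - rc t * nr <= 0.
  rewrite /Ql /nr El qform_spec // (norm_spec x Plu) -/y' mulr_sumr -sumrB.
  apply: sumr_le0 => j _; case: (boolP (Sl j)) => hj.
    by rewrite [rc t * _]mulrC -mulrBr mulr_ge0_le0 ?mul_conjC_ge0 // mxE subr_le0 le_rc.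
  by rewrite supl // !mul0r mulr0 subrr.
have A3 : 0 <= Ql - Qk.
  have h := psd_complex sN pN x; rewrite map_mxB mulmxBr mulmxBl in h.
  have gen (M1 M2 : 'M[R[i]]_1) : 0 <= (M1 - M2) 0 0 -> 0 <= M1 0 0 - M2 0 0.
    by rewrite !mxE.
  exact: gen _ _ h.
have : 0 < Ql - rc t * nr.
  by rewrite -(subrKA Qk) addrC; apply: ltr_wpDr.
by move=> h; have := lt_le_trans h A2; rewrite ltxx.
Qed.


Lemma cnt n (p : pred 'I_n) : count p (enum 'I_n) = #|p|.
Proof. by rewrite enumT cardE /enum_mem size_filter. Qed.

Lemma size_dseq (R : rcfType) n (d : 'rV[R]_n) : size (dseq d) = n.
Proof. by rewrite /dseq size_map size_enum_ord. Qed.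

Lemma eig_exists (R : realType) n (L : 'M[R]_n) : L^T = L -> exists s, eig_asc L s.
Proof.
move=> sL; have [P Pu [d E]] := spec_real sL.
have ch := char_spec Pu E.
exists (sort <=%R (dseq d)); split.
- by rewrite size_sort size_dseq.
- by apply: sort_sorted; exact: le_total.
- by rewrite ch; apply: perm_big; rewrite perm_sym perm_sort.
Qed.

Lemma eig_perm (R : realType) n (L : 'M[R]_n) (P : 'M[R[i]]_n) (d : 'rV[R]_n) s :
  P \is unitarymx ->
  map_mx (real_complex R) L = invmx P *m diag_mx (map_mx (real_complex R) d) *m P ->
  eig_asc L s -> perm_eq s (dseq d).
Proof.
move=> Pu E [_ _ ch]; apply: prod_XsubC_eq; rewrite -ch.
exact: char_spec Pu E.
Qed.

Lemma eig_mono (R : realType) n (Lk Ll : 'M[R]_n) :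
  Lk^T = Lk -> Ll^T = Ll -> loewner_le Lk Ll ->
  forall sk sl, eig_asc Lk sk -> eig_asc Ll sl ->
  forall i, (i < n)%N -> sk`_i <= sl`_i.
Proof.
move=> sk' sl' hL sk sl ek el i hi.
have [Pk Pku [dk Ek]] := spec_real sk'.
have [Pl Plu [dl El]] := spec_real sl'.
have pk := eig_perm Pku Ek ek; have pl := eig_perm Plu El el.
have sN : (Ll - Lk)^T = Ll - Lk by rewrite (raddfB (@trmx _ _ _)) /= sk' sl'.
have cm (t : R) : (count (fun x => (x <= t)%R) sl <= count (fun x => (x <= t)%R) sk)%N.
  have h := count_mono sN hL Pku Plu Ek El t; rewrite -!cnt in h.
  rewrite (permP pk) (permP pl) /dseq. rewrite count_map. rewrite [X in (_ <= X)%N]count_map. exact: h.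
case: ek => szk srk _; case: el => szl srl _.
rewrite leNgt; apply/negP => hlt.
set t := sl`_i.
have c1 : (i.+1 <= count (fun x => (x <= t)%R) sl)%N.
  rewrite -(cat_take_drop i.+1 sl) count_cat.
  have -> : count (fun x => (x <= t)%R) (take i.+1 sl) = i.+1.
    have /eqP -> : count (fun x => (x <= t)%R) (take i.+1 sl) == size (take i.+1 sl).
      rewrite -all_count; apply/(all_nthP 0) => j.
      rewrite size_takel ?szl // => hj; rewrite nth_take //.
      apply: (sorted_leq_nth le_trans lexx) => //; rewrite ?inE ?szl //.
      exact: leq_trans hj hi.
    by rewrite size_takel ?szl.
  exact: leq_addr.
have c2 : (count (fun x => (x <= t)%R) sk <= i)%N.
  rewrite -(cat_take_drop i sk) count_cat.
  have -> : count (fun x => (x <= t)%R) (drop i sk) = 0%N.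
    apply/eqP; rewrite -leqn0 leqNgt -has_count; apply/negP => /(has_nthP 0) [j].
    rewrite size_drop => hj; rewrite nth_drop => hle.
    have : sk`_i <= sk`_(i + j).
      apply: (sorted_leq_nth le_trans lexx) => //; rewrite ?inE ?szk //.
        by move: hj; rewrite szk; lia.
      exact: leq_addr.
    move=> h; have := le_trans h hle; rewrite leNgt hlt //.
  rewrite addn0; apply: leq_trans (count_size _ _) _.
  by rewrite size_takel ?szk // ltnW.
by have := leq_trans c1 (leq_trans (cm t) c2); rewrite ltnn.
Qed.

Unset Implicit Arguments.

Theorem theorem6p10 (R : realType) (q D m : nat)
    (A B : 'M[R]_(tdim q D, m)) (k : nat) :
  [/\ sym_mx (Lap A B k) /\ psd (Lap A B k),
      forall x : 'cV[R]_m, Lap A B k *m x = 0 <-> pbnd A B k *m x = 0,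
      (\rank (Lap A B k))%:Z
        = (size (Vmac A B))%:Z - (c_macro A B)%:Z - (delta A B k)%:Z
    & forall l : nat, (k <= l)%N ->
        [/\ loewner_le (Lap A B k) (Lap A B l),
            exists s, eig_asc (Lap A B k) s
          & forall sk sl : seq R, eig_asc (Lap A B k) sk ->
              eig_asc (Lap A B l) sl ->
              forall i : nat, (i < m)%N -> sk`_i <= sl`_i]].
Proof.
have symL j : (Lap A B j)^T = Lap A B j by rewrite /Lap trmx_mul trmxK.
split.
- by split; [exact: symL | exact: psd_gram].
- by move=> x; exact: gram_ker.
- exact: rank_formula.
move=> l kl; split.
- exact: Lap_loewner.
- exact: eig_exists.
- move=> sk sl ek el i hi.
  exact: (eig_mono (symL k) (symL l) (Lap_loewner A B kl) ek el hi).
Qed.
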